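(* Let $\mathbb S$ be the Sorgenfrey line (the reals with topology generated by intervals $[a,b)$). Then every function from $\mathbb S$ to a metric space is weakly separated, and the function $\chi_{\mathbb Q}\colon\mathbb S\to\mathbb R$ is weakly separated but not Borel 1.
   Context: For a topological space $X$ and metric space $(Y,d)$, a neighborhood assignment is a family $\{V_x\}_{x\in X}$ of open subsets of $X$ with $x\in V_x$. $f\colon X\to Y$ is weakly separated if for every $\varepsilon>0$ there is a neighborhood assignment $\{V_x\}_{x\in X}$ such that for all $x,y\in X$, $(x,y)\in V_y\times V_x$ implies $d(f(x),f(y))<\varepsilon$; Borel 1 if $f^{-1}(V)$ is $F_\sigma$ in $X$ for every open $V\subseteq Y$. $\chi_{\mathbb Q}$ is the characteristic function of the rationals. *)

(* Defs.v *)
From HB Require Import structures.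
From mathcomp Require Import all_boot all_order all_algebra.
From mathcomp Require Import all_classical all_reals all_analysis borel_hierarchy.
Set Implicit Arguments. Unset Strict Implicit. Unset Printing Implicit Defensive.
Import Order.TTheory GRing.Theory Num.Theory.
Import numFieldNormedType.Exports.
Local Open Scope classical_set_scope.
Local Open Scope ring_scope.

Definition sorgenfrey (R : realType) : Type := R.

HB.instance Definition _ (R : realType) := Choice.on (sorgenfrey R).

Definition sorgenfrey_interval (R : realType) (p : R * R) : set (sorgenfrey R) :=
  [set x : sorgenfrey R | p.1 <= (x : R) < p.2].

HB.instance Definition _ (R : realType) :=
  isSubBaseTopological.Build (sorgenfrey R) setT (@sorgenfrey_interval R).

Definition is_metric (R : realType) (Y : Type) (d : Y -> Y -> R) : Prop :=
  [/\ forall x y, 0 <= d x y,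
      forall x y, d x y = 0 <-> x = y,
      forall x y, d x y = d y x &
      forall x y z, d x z <= d x y + d y z].

Definition weakly_separated (R : realType) (X : topologicalType) (Y : Type)
  (d : Y -> Y -> R) (f : X -> Y) : Prop :=
  forall eps : R, 0 < eps ->
    exists V : X -> set X,
      (forall x, open (V x) /\ V x x) /\
      (forall x y, V y x -> V x y -> d (f x) (f y) < eps).

Definition borel1 (X Y : topologicalType) (f : X -> Y) : Prop :=
  forall V : set Y, open V -> Fsigma (f @^-1` V).

Definition chiQ (R : realType) (x : sorgenfrey R) : R :=
  if `[< exists q : rat, (x : R) = ratr q >] then 1 else 0.

Definition dist_R (R : realType) (x y : R) : R := `|x - y|.

(* Main.v *)
Require Import Defs.
From HB Require Import structures.
From mathcomp Require Import all_boot all_order all_algebra.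
From mathcomp Require Import all_classical all_reals all_analysis.
From mathcomp Require Import finmap.
From mathcomp.algebra_tactics Require Import lra.
Import Order.TTheory GRing.Theory Num.Theory.
Import numFieldNormedType.Exports.
Local Open Scope classical_set_scope.
Local Open Scope ring_scope.
Section S.
Variable R : realType.

Lemma seq_delta (x : R) (s : seq (R * R)) :
  (forall p, p \in s -> p.1 <= x < p.2) ->
  exists2 e : R, 0 < e & forall y : R, x <= y < x + e ->
     forall p, p \in s -> p.1 <= y < p.2.
Proof.
elim: s => [|p s IH] H.
  by exists 1 => // y _ p; rewrite in_nil.
have [e e0 He] := IH (fun q qs => H q (@mem_behead _ (p :: s) q qs)).
have /andP[p1 p2] := H p (mem_head _ _).
exists (Num.min e (p.2 - x)).
  have : (0:R) < Num.min e (p.2 - x) by rewrite lt_min e0 subr_gt0.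
  by [].
have h1 : Num.min e (p.2 - x) <= e by rewrite ge_min lexx.
have h2 : Num.min e (p.2 - x) <= p.2 - x by rewrite ge_min lexx orbT.
move=> y /andP[xy yl] q; rewrite in_cons => /orP[/eqP->|qs].
  rewrite (le_trans p1 xy) /=.
  have : y < x + (p.2 - x) by apply: (lt_le_trans yl); rewrite lerD2l.
  by rewrite addrC subrK.
apply: He => //; rewrite xy (lt_le_trans yl) //.
by rewrite lerD2l.
Qed.

Lemma nb_sorg (x : sorgenfrey R) U : nbhs x U ->
  exists2 e : R, 0 < e & forall y : R, x <= y < x + e -> U y.
Proof.
move=> [B [[D' sD <-] Bx sBU]].
move: Bx => [C DC Cx]; move: (DC) => /sD [F sF CE].
rewrite -CE in Cx.
have [e e0 He] := @seq_delta x (finmap.enum_fset F) (fun p pF => Cx p pF).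
exists e => // y hy; apply: sBU; exists C; first exact: DC.
change (C y); rewrite -CE => p pF.
exact: (He y hy p pF).

Qed.

Lemma open_sorg (p : R * R) : open (sorgenfrey_interval p).
Proof.
rewrite openE => x hx.
exists (sorgenfrey_interval p); split => //.
exists [set sorgenfrey_interval p]; last by rewrite bigcup_set1.
move=> A ->; exists (fset1 p); last by rewrite set_fset1 bigcap_set1.
by move=> q _; apply/mem_set.
Qed.

Lemma step (F : set (sorgenfrey R)) (qk : R) :
  closed F -> (forall r : rat, ~ F (ratr r)) ->
  forall a b : R, a < b -> exists p : R * R,
    [/\ a <= p.1, p.1 < p.2, p.2 <= b &
      forall z : R, p.1 <= z <= p.2 -> ~ F z /\ z <> qk].
Proof.
move=> cF Fr a b ab.
have [q [[r qr] aq qb qne]] : exists q : R,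
    [/\ exists r : rat, q = ratr r, a < q, q < b & q <> qk].
  have am : a < (a + b) / 2 by lra.
  have mb : (a + b) / 2 < b by lra.
  have [r1] := rat_in_itvoo am; rewrite in_itv /= => /andP[h1 h2].
  have [r2] := rat_in_itvoo mb; rewrite in_itv /= => /andP[h3 h4].
  have [e1|ne1] := eqVneq (ratr r1 : R) qk.
    exists (ratr r2); split; [by exists r2|lra|lra|].
    by move=> e2; move: h2 h3; rewrite e1 -e2 => h2 h3; lra.
  by exists (ratr r1); split; [by exists r1|lra|lra|apply/eqP].
have oF : open (~` F) by rewrite openC.
have nF : nbhs (q : sorgenfrey R) (~` F).
  by move: oF; rewrite openE => /(_ q); apply; rewrite qr; exact: Fr.
have [d d0 Hd] := @nb_sorg q _ nF.
pose c := Num.min d (b - q).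
have c0 : 0 < c by rewrite lt_min d0 subr_gt0.
have cd : c <= d by rewrite ge_min lexx.
have cb : c <= b - q by rewrite ge_min lexx orbT.
pose e := if q < qk then Num.min c (qk - q) else c.
have e0 : 0 < e by rewrite /e; case: ifP => // qq; rewrite lt_min c0 subr_gt0.
have ec : e <= c by rewrite /e; case: ifP => // _; rewrite ge_min lexx.
have eq' : q < qk -> e <= qk - q by rewrite /e => ->; rewrite ge_min lexx orbT.
exists (q, q + e / 2); split => /=; [lra|lra|lra|].
move=> z /andP[z1 z2]; split.
  by apply: Hd; apply/andP; split => //; lra.
have [qq|] := ltP q qk.
  have := eq' qq; move=> h zq; lra.
rewrite le_eqVlt => /orP[/eqP qq|qq] zq; first by apply: qne.
lra.
Qed.

Fixpoint sq (g : nat * (R * R) -> R * R) (n : nat) : R * R :=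
  match n with 0%N => (0, 1) | k.+1 => g (k, sq g k) end.

Lemma not_borel1 : ~ borel1 (@chiQ R : sorgenfrey R -> R).
Proof.
move=> H.
have oV : open [set y : R | y < 1/2] by exact: open_lt.
have [F cF PF] := H _ oV.
have chi1 : forall r : rat, chiQ (ratr r : sorgenfrey R) = 1.
  by move=> r; rewrite /chiQ asboolT //; exists r.
have Fr : forall k (r : rat), ~ F k (ratr r).
  move=> k r Fk.
  have : (@chiQ R @^-1` [set y : R | y < 1/2]) (ratr r : sorgenfrey R).
    by rewrite PF; exists k.
  rewrite /= chi1; lra.
pose qk (k : nat) : R := if (@mathcomp.boot.choice.unpickle rat k) is Some r then ratr r else 0.
have ex : forall kp : nat * (R * R), exists p : R * R, kp.2.1 < kp.2.2 ->
     [/\ kp.2.1 <= p.1, p.1 < p.2, p.2 <= kp.2.2 &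
      forall z : R, p.1 <= z <= p.2 -> ~ F kp.1 z /\ z <> qk kp.1].
  move=> [k [a b]] /=.
  have [ab|ba] := ltP a b.
    have [p Hp] := @step (F k) (qk k) (cF k) (Fr k) _ _ ab.
    by exists p.
  by exists ((0:R), (0:R)).
have [g Hg] := boolp.choice ex.
pose s := sq g.
have sS : forall k, s k.+1 = g (k, s k) by [].
have slt : forall k, (s k).1 < (s k).2.
  elim=> [|k IH]; first by rewrite /s /=; lra.
  by rewrite sS; have [] := Hg (k, s k) IH.
have Hs : forall k, [/\ (s k).1 <= (s k.+1).1, (s k.+1).1 < (s k.+1).2,
   (s k.+1).2 <= (s k).2 &
   forall z : R, (s k.+1).1 <= z <= (s k.+1).2 -> ~ F k z /\ z <> qk k].
  by move=> k; rewrite sS; exact: (Hg (k, s k) (slt k)).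
have mono : forall j k, (j <= k)%N -> (s j).1 <= (s k).1 /\ (s k).2 <= (s j).2.
  move=> j k /subnK <-; elim: (k - j)%N => [|n [IH1 IH2]]; first by rewrite add0n.
  have [h1 _ h3 _] := Hs (n + j)%N.
  by rewrite addSn; split; [apply: le_trans h1|apply: le_trans IH2].
have cross : forall j k, (s j).1 <= (s k).2.
  move=> j k; have [m [jm km]] : exists m, (j <= m)%N /\ (k <= m)%N.
    by exists (maxn j k); rewrite leq_maxl leq_maxr.
  have [h1 _] := mono _ _ jm; have [_ h2] := mono _ _ km.
  by apply: (le_trans h1); apply: (le_trans (ltW (slt m))).
pose E := range (fun k => (s k).1).
have ubE : has_ubound E by exists (s 0%N).2 => _ [k _ <-]; exact: cross.
pose x := sup E.
have xin : forall k, (s k).1 <= x <= (s k).2.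
  move=> k; apply/andP; split.
    by apply: ub_le_sup => //; exists k.
  apply: ge_sup; first by exists (s 0%N).1, 0%N.
  by move=> _ [j _ <-]; exact: cross.
have xirr : forall r : rat, x <> ratr r.
  move=> r xr.
  have [_ _ _ h] := Hs (@mathcomp.boot.choice.pickle rat r).
  have [_] := h x (xin _).
  by apply; rewrite /qk mathcomp.boot.choice.pickleK.
have cx : chiQ (x : sorgenfrey R) = 0.
  by rewrite /chiQ asboolF // => -[r /xirr].
have : (@chiQ R @^-1` [set y : R | y < 1/2]) (x : sorgenfrey R).
  by rewrite /= cx; lra.
rewrite PF => -[k _ Fk].
have [_ _ _ h] := Hs k.
by have [] := h x (xin _).
Qed.

Lemma ws_all (Y : Type) (d : Y -> Y -> R) (hd : forall y, d y y = 0)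
  (f : sorgenfrey R -> Y) : weakly_separated d f.
Proof.
move=> eps eps0.
exists (fun x : sorgenfrey R => sorgenfrey_interval ((x : R), (x : R) + 1)).
split.
  move=> x; split; first exact: open_sorg.
  by rewrite /sorgenfrey_interval /= lexx /=; lra.
move=> x y /andP[/= h1 _] /andP[/= h2 _].
have -> : x = y by apply/eqP; rewrite eq_le h1 h2.
by rewrite hd.
Qed.
End S.

Theorem mainTheorem6 (R : realType) :
  (forall (Y : Type) (d : Y -> Y -> R), is_metric d ->
     forall f : sorgenfrey R -> Y, weakly_separated d f) /\
  weakly_separated (@dist_R R) (@chiQ R) /\
  ~ borel1 (@chiQ R : sorgenfrey R -> R).
Proof.
split.
  move=> Y d [_ hd _ _] f; apply: ws_all => y; exact/hd.
split; last exact: not_borel1.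
by apply: ws_all => y; rewrite /dist_R subrr normr0.
Qed.
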